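(* The sequence of expected probabilities $\mathrm{Prob}(\mathcal{V}\mid\mathcal{E})$ that Peggy deceives Victor by guessing and sending her response before receiving the challenge is indistinguishable from the sequence $$q_\ell=\sum_{h\in\mathbb{Z}_2^{\ell}}\sum_{x\in\mathbb{Z}_2^\ell}2^{-\ell}\,G(h\vdash x\boxplus h)_\ell=\left(\tfrac34\right)^\ell.$$ In particular $\mathrm{Prob}(\mathcal{V}\mid\mathcal{E})$ is negligible.
   Context: Hancke–Kuhn protocol with security parameter $\ell$: shared secret $s$, hash $H$ modeled as a random oracle, counters $a,b$ never reused, token $h=H(s::a::b)=h^{(0)}::h^{(1)}$, Victor's uniformly random challenge $x\in\mathbb{Z}_2^\ell$ (independent of $s,a,b$), correct response $x\boxplus h$ with $(x\boxplus h)_i=h^{(x_i)}_i$. $\mathcal{E}$: the event/run in which Peggy (knowing $s$) sends her response before receiving the challenge. $\mathcal{V}$: Victor observes a satisfactory run (sends $x$ and receives the correct response in time). $G(\Xi\vdash\Theta)$ is the guessing chance (maximal probability over randomized guessing procedures of producing $\Theta$ from $\Xi$). Sequences are indistinguishable if they differ by a negligible function $\nu$ (for every polynomial $q$ with non-negative integer coefficients, $\nu(\ell)<1/q(\ell)$ for large $\ell$). *)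

(* Defs.v *)
From HB Require Import structures.
From mathcomp Require Import all_boot all_order all_algebra.
From mathcomp Require Import boolp classical_sets reals.
Set Implicit Arguments. Unset Strict Implicit. Unset Printing Implicit Defensive.
Import Order.TTheory GRing.Theory Num.Theory.
Local Open Scope ring_scope.

Definition bits (l : nat) := {ffun 'I_l -> bool}.

(* the token h = h^(0) :: h^(1), an element of Z_2^(2l) *)
Definition token (l : nat) := (bits l * bits l)%type.

Definition boxplus (l : nat) (x : bits l) (h : token l) : bits l :=
  [ffun i => if x i then h.2 i else h.1 i].

Definition is_distr (R : realType) (T : finType) (p : {ffun T -> R}) : Prop :=
  (forall t, 0 <= p t) /\ \sum_(t : T) p t = 1.

(* A randomized guessing procedure (in run E, before seeing x) maps the
   information available to Peggy, namely the token h, to a distribution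
   over responses. *)
Definition guess_proc (R : realType) (l : nat) :=
  token l -> {ffun bits l -> R}.

Definition is_guess_proc (R : realType) (l : nat) (g : guess_proc R l) : Prop :=
  forall h, is_distr (g h).

(* success probability of g: h uniform on Z_2^(2l) (random oracle output on
   fresh counters), x uniform on Z_2^l independent of h *)
Definition success (R : realType) (l : nat) (g : guess_proc R l) : R :=
  \sum_(h : token l) \sum_(x : bits l)
     (2%:R ^- (2 * l)) * (2%:R ^- l) * g h (boxplus x h).

(* Prob(V | E)_l : optimal probability that Peggy, sending her response
   before receiving the challenge, makes Victor observe a satisfactory run *)
Definition ProbVE (R : realType) (l : nat) : R :=
  sup [set success g | g in [set g : guess_proc R l | is_guess_proc g]].

(* guessing chance G(h |- x [+] h) for a fixed token h (x uniform, unknown) *)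
Definition Gtok (R : realType) (l : nat) (h : token l) : R :=
  sup [set \sum_(x : bits l) (2%:R ^- l) * p (boxplus x h)
       | p in [set p : {ffun bits l -> R} | is_distr p]].

Definition q_seq (R : realType) (l : nat) : R :=
  \sum_(h : token l) (2%:R ^- (2 * l)) * Gtok R h.

Definition poly_eval (c : seq nat) (l : nat) : nat :=
  \sum_(i < size c) nth 0%N c i * l ^ i.

Definition negligible (R : realType) (nu : nat -> R) : Prop :=
  forall c : seq nat, has (fun a => a != 0%N) c ->
    exists N : nat, forall l : nat, (N <= l)%N ->
      nu l < 1 / (poly_eval c l)%:R.

Definition indistinguishable (R : realType) (a b : nat -> R) : Prop :=
  negligible (fun l => `|a l - b l|).

(* Main.v *)
Require Import Defs.
From mathcomp Require Import all_boot all_order all_algebra.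
From mathcomp Require Import boolp classical_sets reals.
From mathcomp Require Import zify.
Import Order.TTheory GRing.Theory Num.Theory.
Set Implicit Arguments. Unset Strict Implicit. Unset Printing Implicit Defensive.
Lemma expmono m n e : (m <= n)%N -> (m ^ e <= n ^ e)%N.
Proof. move=> h; elim: e => [|e IH]; rewrite ?expn0 // !expnS; exact: leq_mul. Qed.

Lemma ffact_ge m n : ((n - m) ^ m <= n ^_ m)%N.
Proof.
elim: m => [|m IH]; first by rewrite ffactn0 expn0.
rewrite ffactnSr expnS mulnC; apply: leq_mul; last lia.
apply: leq_trans IH; apply: expmono; lia.
Qed.

Lemma grow K d : exists N, forall l, (N <= l)%N -> (K * l ^ d * 3 ^ l < 4 ^ l)%N.
Proof.
set e := d.+1. set F := e`!.
have Fpos : (0 < F)%N by exact: fact_gt0.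
set C := (F * 3 ^ e * 2 ^ e)%N.
have eE : e = d.+1 by []. have FE : F = e`! by []. have CE : C = (F * 3 ^ e * 2 ^ e)%N by [].
clearbody C. clearbody F. clearbody e.
exists (2 * e + K * C + 1)%N => l hl.
have el : (e <= l)%N by lia.
have h1 : ('C(l, e) * 3 ^ (l - e) <= 4 ^ l)%N.
  have -> : (4 = 3 + 1)%N by [].
  rewrite expnDn (bigD1 (Ordinal (_ : e < l.+1)%N)) /=; last by lia.
  by rewrite exp1n muln1 leq_addr.
have h2 : ((l - e) ^ e * 3 ^ l <= F * 3 ^ e * 4 ^ l)%N.
  have -> : (3 ^ l = 3 ^ (l - e) * 3 ^ e)%N by rewrite -expnD subnK.
  have h3 := ffact_ge e l. rewrite -bin_ffact in h3. rewrite -FE in h3.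
  apply: (@leq_trans ('C(l, e) * F * 3 ^ (l - e) * 3 ^ e)).
    by rewrite mulnA leq_mul2r leq_mul2r h3 !orbT.
  have : ('C(l, e) * 3 ^ (l - e) * (F * 3 ^ e) <= 4 ^ l * (F * 3 ^ e))%N
    by rewrite leq_mul2r h1 orbT.
  by rewrite (mulnC (4 ^ l)) !mulnA (mulnAC ('C(l, e))).
have h4 : (l ^ e <= 2 ^ e * (l - e) ^ e)%N.
  rewrite -expnMn; apply: expmono; lia.
have h5 : (l ^ e * 3 ^ l <= C * 4 ^ l)%N.
  apply: (@leq_trans (2 ^ e * (l - e) ^ e * 3 ^ l)); first by rewrite leq_mul2r h4 orbT.
  rewrite CE -mulnA (mulnC (F * 3 ^ e)) -(mulnA (2 ^ e)) leq_mul2l h2 orbT //.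
have pos : (0 < l ^ d * 3 ^ l)%N by rewrite muln_gt0 !expn_gt0; apply/andP; split; lia.
have Cpos : (0 < C)%N by rewrite CE !muln_gt0 Fpos !expn_gt0.
rewrite -(ltn_pmul2l Cpos).
have h6 : (K * C * (l ^ d * 3 ^ l) < l * (l ^ d * 3 ^ l))%N by rewrite ltn_pmul2r //; lia.
rewrite eE expnS -mulnA in h5.
apply: leq_trans h5. move: h6.
by rewrite !mulnA (mulnC C K).
Qed.
Lemma poly_pos c l : has (fun a => a != 0%N) c -> (0 < l)%N -> (0 < poly_eval c l)%N.
Proof.
move=> /hasP [x xc x0] l0; rewrite /poly_eval.
have ic : (index x c < size c)%N by rewrite index_mem.
rewrite (bigD1 (Ordinal ic)) //= nth_index //.
apply: leq_trans (leq_addr _ _); rewrite muln_gt0 expn_gt0 l0; lia.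
Qed.

Lemma poly_le c l : (0 < l)%N -> (poly_eval c l <= sumn c * l ^ size c)%N.
Proof.
move=> l0; rewrite /poly_eval.
apply: (@leq_trans (\sum_(i < size c) nth 0%N c i * l ^ size c)).
  apply: leq_sum => i _; rewrite leq_mul2l leq_pexp2l // ?orbT //; exact: ltnW.
rewrite -big_distrl /= leq_mul2r; apply/orP; right.
apply: eq_leq; elim: c {l0} => [|a c IH]; first by rewrite big_ord0.
by rewrite big_ord_recl /= IH.

Qed.
Local Open Scope ring_scope.
Lemma sup_attained (R : realType) (E : set R) x : E x -> ubound E x -> sup E = x.
Proof.
move=> Ex ub; apply/le_anti/andP; split.
  by apply: ge_sup => //; exists x.
by apply: ub_le_sup => //; exists x.
Qed.

Definition Mh (R : realType) l (h : token l) : R :=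
  \prod_(i < l) (if h.1 i == h.2 i then 2%:R else 1).

Definition Nh (R : realType) l (h : token l) (y : bits l) : R :=
  \sum_(x : bits l) ((boxplus x h == y)%:R : R).

Lemma Nh_prod (R : realType) l (h : token l) y :
  Nh R h y = \prod_(i < l) (((h.1 i == y i)%:R : R) + (h.2 i == y i)%:R).
Proof.
rewrite /Nh.
have -> : \sum_(x : bits l) ((boxplus x h == y)%:R : R) =
   \sum_(x : bits l) \prod_(i < l) (((if x i then h.2 i else h.1 i) == y i)%:R : R).
  apply: eq_bigr => x _.
  case: eqP => [<-|neq].
    by rewrite big1 // => i _; rewrite ffunE eqxx.
  have [i Hi] : exists i, (if x i then h.2 i else h.1 i) != y i.
    apply/existsP; apply: contraNT (introN eqP neq); rewrite negb_exists => /forallP H.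
    apply/eqP/ffunP => i; rewrite ffunE; move: (H i); by rewrite negbK => /eqP.
  by rewrite (bigD1 i) //= (negbTE Hi) mul0r.
rewrite -(bigA_distr_bigA (fun i b => (((if b then h.2 i else h.1 i) == y i)%:R : R))) /=.
apply: eq_bigr => i _; by rewrite big_bool /= addrC.
Qed.

Lemma Nh_le (R : realType) l (h : token l) y : Nh R h y <= Mh R h.
Proof.
rewrite Nh_prod /Mh; apply: ler_prod => i _; apply/andP; split.
  by rewrite addr_ge0.
case: (h.1 i) (h.2 i) (y i) => [] [] [] /=; rewrite ?addr0 ?add0r ?lexx ?ler1n //.
Qed.

Lemma Nh_h1 (R : realType) l (h : token l) : Nh R h h.1 = Mh R h.
Proof.
rewrite Nh_prod /Mh; apply: eq_bigr => i _.
by case: (h.1 i) (h.2 i) => [] [] /=; rewrite ?addr0 ?add0r.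
Qed.

Lemma T_eq (R : realType) l (h : token l) (p : {ffun bits l -> R}) :
  \sum_(x : bits l) (2%:R ^- l) * p (boxplus x h) =
  (2%:R ^- l) * \sum_(y : bits l) Nh R h y * p y.
Proof.
rewrite -big_distrr /=; congr (_ * _).
rewrite /Nh.
apply: esym; rewrite (eq_bigr (fun y => \sum_(x : bits l) ((boxplus x h == y)%:R : R) * p y)); last by move=> y _; rewrite mulr_suml.
rewrite exchange_big /=.
apply: eq_bigr => x _; apply: esym.
rewrite (bigD1 (boxplus x h)) //= eqxx mul1r big1 ?addr0 // => y /negbTE.
by rewrite eq_sym => ->; rewrite mul0r.
Qed.

Lemma T_le (R : realType) l (h : token l) (p : {ffun bits l -> R}) :
  is_distr p ->
  \sum_(x : bits l) (2%:R ^- l) * p (boxplus x h) <= (2%:R ^- l) * Mh R h.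
Proof.
move=> [p0 p1]; rewrite T_eq; apply: ler_wpM2l; first by rewrite invr_ge0 exprn_ge0 // ler0n.
apply: (@le_trans _ _ (\sum_(y : bits l) Mh R h * p y)).
  by apply: ler_sum => y _; rewrite ler_wpM2r // Nh_le.
by rewrite -big_distrr /= p1 mulr1.
Qed.

Definition dirac (R : realType) l (a : bits l) : {ffun bits l -> R} :=
  [ffun y => ((y == a)%:R : R)].

Lemma dirac_distr (R : realType) l (a : bits l) : is_distr (dirac R a).
Proof.
split; first by move=> t; rewrite ffunE ler0n.
rewrite (bigD1 a) //= ffunE eqxx big1 ?addr0 // => y /negbTE.
by rewrite ffunE => ->.
Qed.

Lemma T_dirac (R : realType) l (h : token l) :
  \sum_(x : bits l) (2%:R ^- l) * dirac R h.1 (boxplus x h) = (2%:R ^- l) * Mh R h.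
Proof.
rewrite T_eq (bigD1 h.1) //= ffunE eqxx mulr1 Nh_h1 big1 ?addr0 // => y /negbTE.
by rewrite ffunE => ->; rewrite mulr0.
Qed.

Lemma Gtok_eq (R : realType) l (h : token l) : Gtok R h = (2%:R ^- l) * Mh R h.
Proof.
rewrite /Gtok; apply: sup_attained.
  by exists (dirac R h.1); [exact: dirac_distr | exact: T_dirac].
by move=> _ [p pd <-]; exact: T_le.
Qed.

From mathcomp Require Import ring lra.

Lemma success_eq (R : realType) l (g : guess_proc R l) :
  success g = \sum_(h : token l) (2%:R ^- (2 * l)) *
     \sum_(x : bits l) (2%:R ^- l) * g h (boxplus x h).
Proof.
apply: eq_bigr => h _; rewrite big_distrr; apply: eq_bigr => x _ /=.
by rewrite mulrA.
Qed.

Lemma ProbVE_eq (R : realType) l : ProbVE R l = q_seq R l.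
Proof.
rewrite /ProbVE; apply: sup_attained.
  exists (fun h => dirac R h.1); first by move=> h; exact: dirac_distr.
  rewrite success_eq /q_seq; apply: eq_bigr => h _.
  by rewrite T_dirac Gtok_eq.
move=> _ [g gd <-]; rewrite success_eq /q_seq; apply: ler_sum => h _.
apply: ler_wpM2l; first by rewrite invr_ge0 exprn_ge0 // ler0n.
by rewrite Gtok_eq; exact: T_le.
Qed.

Lemma sumMh (R : realType) l : \sum_(h : token l) Mh R h = 6%:R ^+ l.
Proof.
rewrite /Mh -(pair_bigA _ (fun (h0 h1 : bits l) =>
    \prod_(i < l) (if h0 i == h1 i then (2%:R : R) else 1))) /=.
have E1 : forall h0 : bits l, \sum_(h1 : bits l)
    \prod_(i < l) (if h0 i == h1 i then (2%:R : R) else 1) = \prod_(i < l) 3%:R.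
  move=> h0.
  rewrite -(bigA_distr_bigA (fun i b => if h0 i == b then (2%:R : R) else 1)) /=.
  apply: eq_bigr => i _; rewrite big_bool /=.
  by case: (h0 i) => /=; rewrite ?natr1 ?nat1r.
under eq_bigr do rewrite E1.
rewrite -(bigA_distr_bigA (fun (i : 'I_l) (b : bool) => (3%:R : R))) /=.
rewrite big_bool /= -natrD prodr_const card_ord //.
Qed.

Lemma q_eq (R : realType) l : q_seq R l = (3%:R / 4%:R) ^+ l.
Proof.
rewrite /q_seq.
under eq_bigr do rewrite Gtok_eq mulrA.
rewrite -big_distrr /= sumMh exprM -!exprVn -!exprMn.
by congr (_ ^+ _); field.
Qed.

Theorem proposition6p7 (R : realType) :
  indistinguishable (ProbVE R) (q_seq R) /\
  (forall l : nat, q_seq R l = (3%:R / 4%:R) ^+ l) /\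
  negligible (ProbVE R).
Proof.
split.
  move=> c hc; exists 1%N => l hl.
  rewrite ProbVE_eq subrr normr0 div1r invr_gt0 ltr0n; exact: poly_pos.
split; first exact: q_eq.
move=> c hc; have [N HN] := grow (sumn c) (size c).
exists (maxn N 1) => l hl.
have l0 : (0 < l)%N by lia.
have Pp := poly_pos hc l0.
have key : (3 ^ l * poly_eval c l < 4 ^ l)%N.
  apply: leq_ltn_trans (HN l _); last by lia.
  rewrite mulnC leq_mul2r; apply/orP; right; exact: poly_le.
rewrite ProbVE_eq q_eq expr_div_n ltr_pdivlMr ?ltr0n // mulrAC.
rewrite ltr_pdivrMr ?exprn_gt0 ?ltr0n // mul1r -!natrX -natrM ltr_nat.
exact: key.
Qed.
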